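(* Let $\{a_l\}_{l\ge0}$ be a sequence of complex numbers and let $a_l^*=\sum_{k=0}^l\binom lk(-1)^ka_k$ for $l\ge0$. For $k\ge0$ set $$A_k(t)=\sum_{l=0}^k\binom kl(-1)^la_lt^{k-l},\qquad A_k^*(t)=\sum_{l=0}^k\binom kl(-1)^la_l^*t^{k-l}.$$ Let $n$ be a positive integer, let $r,s,t$ be complex numbers with $r+s+t=n-1$, and let $x,y,z$ be complex numbers with $x+y+z=1$. Then $$\sum_{k=0}^n(-1)^k\binom rkx^{n-k}\left(\binom {s}{n-k}A_k(y)-(-1)^n\binom t{n-k}A_k^*(z)\right)=0.$$
   Context: For complex $z$ and integer $k\ge0$, $\binom zk=z(z-1)\cdots(z-k+1)/k!$ (with $\binom z0=1$). *)

(* Defs.v *)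
From HB Require Import structures.
From mathcomp Require Import all_boot all_order all_algebra.
From mathcomp Require Import complex.
From mathcomp Require Import Rstruct.
Set Implicit Arguments. Unset Strict Implicit. Unset Printing Implicit Defensive.
Import Order.TTheory GRing.Theory Num.Theory.
Local Open Scope ring_scope.

Definition CC := complex Rdefinitions.R.

Definition binomC (z : CC) (k : nat) : CC :=
  (\prod_(i < k) (z - i%:R)) / (k`!)%:R.

Definition astar (a : nat -> CC) (l : nat) : CC :=
  \sum_(k < l.+1) ('C(l, k))%:R * (-1) ^+ k * a k.

Definition Apoly (a : nat -> CC) (k : nat) (t : CC) : CC :=
  \sum_(l < k.+1) ('C(k, l))%:R * (-1) ^+ l * a l * t ^+ (k - l).

(* Main.v *)
Set Warnings "-all".
Require Import Defs.
From HB Require Import structures.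
From mathcomp Require Import all_boot all_order all_algebra.
From mathcomp Require Import Rstruct complex ring.
Import GRing.Theory Num.Theory.
Local Open Scope ring_scope.
Lemma fact_neq0 (k : nat) : (k`!)%:R != 0 :> CC.
Proof. by rewrite pnatr_eq0 -lt0n fact_gt0. Qed.

Lemma S_neq0 (k : nat) : 1 + k%:R != 0 :> CC.
Proof. by rewrite addrC natr1 pnatr_eq0. Qed.

Lemma binomC0 z : binomC z 0 = 1.
Proof. by rewrite /binomC big_ord0 fact0 divr1. Qed.

Lemma binomC_abs z k : binomC z k.+1 * k.+1%:R = z * binomC (z - 1) k.
Proof.
rewrite /binomC big_ord_recl /= subr0 factS natrM.
have h : \prod_(i < k) (z - (bump 0 i)%:R) = \prod_(i < k) (z - 1 - i%:R).
  apply: eq_bigr => i _; rewrite /bump /= add1n -addn1 natrD; ring.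
rewrite h -natr1 addrC; have := fact_neq0 k; have := S_neq0 k.
move=> h1 h2; field; by rewrite h2 natr1 pnatr_eq0.
Qed.

Lemma binomC_absr z k : (z - k%:R) * binomC z k = z * binomC (z - 1) k.
Proof.
have h := binomC_abs z k.
rewrite /binomC big_ord_recr /= factS natrM in h *.
rewrite -h -natr1 addrC; have := fact_neq0 k; have := S_neq0 k.
move=> h1 h2; field; by rewrite h2 ?natr1 ?pnatr_eq0 ?h1.
Qed.

Lemma binomC_trin r k l : (l <= k)%N ->
  binomC r k * ('C(k, l))%:R = binomC r l * binomC (r - l%:R) (k - l).
Proof.
move=> lk; rewrite /binomC.
have [d kd] : exists d, k = (l + d)%N by exists (k - l)%N; rewrite subnKC.
have -> : \prod_(i < k) (r - i%:R) = \prod_(i < l) (r - i%:R) * \prod_(i < k - l) (r - l%:R - i%:R).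
  rewrite kd addKn big_split_ord /=; congr (_ * _); apply: eq_bigr => i _.
  rewrite natrD; ring.
have hf : (k`!)%:R = (('C(k, l))%:R * (l`!)%:R * ((k-l)`!)%:R : CC).
  by rewrite -!natrM -mulnA bin_fact.
rewrite hf; have := fact_neq0 l; have := fact_neq0 (k - l).
have : ('C(k, l))%:R != 0 :> CC by rewrite pnatr_eq0 -lt0n bin_gt0.
move=> h1 h2 h3; field; by rewrite h1 h2 h3.
Qed.

Definition hh (c r : CC) (j : nat) : CC := c ^+ j * binomC r j.
Definition TT (N : nat) (f g : nat -> CC) : CC := \sum_(j < N.+1) f j * g (N - j)%N.

Lemma hh_rec c r j : hh c r j.+1 * j.+1%:R = c * r * hh c (r - 1) j.
Proof. by rewrite /hh -mulrA binomC_abs exprS; ring. Qed.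

Lemma hh_recr c r j : (r - j%:R) * hh c r j = r * hh c (r - 1) j.
Proof. by rewrite /hh mulrCA binomC_absr; ring. Qed.

Lemma TT_rec N c r d s :
  N.+1%:R * TT N.+1 (hh c r) (hh d s) =
  c * r * TT N (hh c (r - 1)) (hh d s) + d * s * TT N (hh c r) (hh d (s - 1)).
Proof.
rewrite /TT mulr_sumr.
have e : forall j : 'I_N.+2, N.+1%:R * (hh c r j * hh d s (N.+1 - j)) =
   (hh c r j * j%:R) * hh d s (N.+1 - j) + hh c r j * (hh d s (N.+1 - j) * (N.+1 - j)%:R).
  move=> j; rewrite natrB; last exact: ltn_ord j.
  set A := hh c r j; set B := hh d s _. ring.
rewrite (eq_bigr _ (fun j _ => e j)) big_split /=; congr (_ + _).
  rewrite big_ord_recl /= mulr0 mul0r add0r mulr_sumr; apply: eq_bigr => i _.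
  rewrite /bump /= add1n subSS hh_rec.
  set A := hh c _ i; set B := hh d s _. ring.
rewrite big_ord_recr /= subnn mulr0 mulr0 addr0 mulr_sumr; apply: eq_bigr => i _.
rewrite subSn; last by rewrite -ltnS ltn_ord.
rewrite hh_rec.
set A := hh c _ i; set B := hh d _ _. ring.
Qed.

Lemma TT_zero M a b r s t : r + s + t = M%:R ->
  r * TT M (hh a (r - 1)) (hh b t) + s * TT M (hh a r) (hh b t)
  + t * TT M (hh a r) (hh b (t - 1)) = 0.
Proof.
move=> hrst; rewrite /TT !mulr_sumr -!big_split /=; apply: big1 => j _.
have e1 := hh_recr a r j; have e2 := hh_recr b t (M - j).
rewrite natrB in e2; last by rewrite -ltnS ltn_ord.
set A := hh a r j in e1 *; set B := hh b t _ in e2 *.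
set A' := hh a (r - 1) j in e1 *; set B' := hh b (t - 1) _ in e2 *.
have -> : r * (A' * B) = (r - j%:R) * A * B by rewrite e1; ring.
have -> : t * (A * B') = (t - (M%:R - j%:R)) * B * A by rewrite e2; ring.
rewrite -hrst; ring.
Qed.

Lemma core (x y : CC) N r s :
  TT N (hh (- y) r) (hh x s) = TT N (hh (- (x + y)) r) (hh (- x) (N%:R - 1 - r - s)).
Proof.
elim: N r s => [|N IH] r s.
  by rewrite /TT !big_ord1 /hh /= !binomC0 !expr0 !mulr1.
apply: (mulfI (S_neq0 N)); rewrite addrC natr1.
rewrite !TT_rec IH IH.
set t := N.+1%:R - 1 - r - s.
have -> : N%:R - 1 - (r - 1) - s = t by rewrite /t -natr1; ring.
have -> : N%:R - 1 - r - (s - 1) = t by rewrite /t -natr1; ring.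
have h0 := @TT_zero N (- (x + y)) (- x) r s t.
rewrite -[LHS]subr0 -(mulr0 x) -h0; last by rewrite /t -natr1; ring.
ring.
Qed.
Lemma bin_trin_nat k m j : (m + j <= k)%N ->
  ('C(k, m + j) * 'C(m + j, m) = 'C(k, m) * 'C(k - m, j))%N.
Proof.
move=> h.
have H1 : ('C(k, m + j) * 'C(m + j, m) * (m`! * j`! * (k - (m + j))`!) = k`!)%N.
  rewrite -(bin_fact h) -{3}(addKn m j) -(bin_fact (leq_addr j m)) addKn. ring.
have hm : (m <= k)%N by apply: leq_trans h; apply: leq_addr.
have hj : (j <= k - m)%N by rewrite leq_subRL.
have H2 : ('C(k, m) * 'C(k - m, j) * (m`! * j`! * (k - (m + j))`!) = k`!)%N.
  by rewrite -(bin_fact hm) -(bin_fact hj) subnDA; ring.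
apply/eqP; rewrite -(@eqn_pmul2r (m`! * j`! * (k - (m + j))`!)) ?H1 ?H2 //.
by rewrite !muln_gt0 !fact_gt0.
Qed.

Lemma shift_sum (G : nat -> CC) l n : (l <= n)%N -> (forall k, (k < l)%N -> G k = 0) ->
  \sum_(k < n.+1) G k = \sum_(j < (n - l).+1) G (l + j)%N.
Proof.
move=> ln H.
rewrite -!(big_mkord xpredT) (@big_cat_nat _ _ _ l 0 n.+1) //=; last by rewrite ltnW.
rewrite big_nat_cond big1 ?add0r; last by move=> i /andP[/andP[_ hi] _]; apply: H.
rewrite -{1}(add0n l) big_addn subSn //.
by rewrite big_mkord; apply: eq_bigr => i _; rewrite addnC.
Qed.

Lemma widen0 (F : nat -> CC) l k : (l <= k)%N -> (forall m, (l < m)%N -> F m = 0) ->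
  \sum_(m < l.+1) F m = \sum_(m < k.+1) F m.
Proof.
move=> lk H; rewrite (big_ord_widen k.+1 F) // big_mkcond; apply: eq_bigr => i _.
by case: ifP => // /negbT; rewrite -leqNgt => h; rewrite H.
Qed.

Lemma Apoly_widen a k n u : (k <= n)%N ->
  Apoly a k u = \sum_(l < n.+1) ('C(k, l))%:R * (-1) ^+ l * a l * u ^+ (k - l).
Proof.
move=> kn; rewrite /Apoly (@widen0 (fun l => ('C(k, l))%:R * (-1) ^+ l * a l * u ^+ (k - l)) k n kn) // => m km.
by rewrite bin_small // !mul0r.
Qed.

Lemma astar_widen a l k : (l <= k)%N ->
  astar a l = \sum_(m < k.+1) ('C(l, m))%:R * (-1) ^+ m * a m.
Proof.
move=> lk; rewrite /astar (@widen0 (fun m => ('C(l, m))%:R * (-1) ^+ m * a m) l k lk) // => m km.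
by rewrite bin_small // !mul0r.
Qed.

Lemma sgn_sq e : (-1) ^+ e * (-1) ^+ e = 1 :> CC.
Proof. by rewrite -exprD addnn -muln2 exprM sqrr_sign. Qed.

Lemma Apoly_astar a k z : Apoly (astar a) k z = (-1) ^+ k * Apoly a k (1 - z).
Proof.
have E : Apoly (astar a) k z = \sum_(l < k.+1) \sum_(m < k.+1)
    ('C(k, l))%:R * (-1) ^+ l * (('C(l, m))%:R * (-1) ^+ m * a m) * z ^+ (k - l).
  rewrite /Apoly; apply: eq_bigr => l _.
  rewrite (@astar_widen a l k); last by rewrite -ltnS ltn_ord.
  rewrite mulr_sumr mulr_suml.
  by apply: eq_bigr => m _.
rewrite E exchange_big /Apoly mulr_sumr; apply: eq_bigr => m _.
have mk : (m <= k)%N by rewrite -ltnS ltn_ord.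
rewrite (@shift_sum (fun l => ('C(k, l))%:R * (-1) ^+ l * (('C(l, m))%:R * (-1) ^+ m * a m) * z ^+ (k - l)) m k mk); last first.
  by move=> l lm; rewrite (@bin_small l m) // !mul0r mulr0 mul0r.
set d := (k - m)%N.
have kd : k = (m + d)%N by rewrite /d subnKC.
have E2 : forall j : 'I_d.+1,
    ('C(k, m + j))%:R * (-1) ^+ (m + j) * (('C(m + j, m))%:R * (-1) ^+ m * a m) * z ^+ (k - (m + j))
    = a m * ('C(k, m))%:R * (((-1) ^+ j * z ^+ (d - j) * 1 ^+ j) *+ 'C(d, j)).
  move=> j; have jd : (m + j <= k)%N by rewrite -leq_subRL // -ltnS ltn_ord.
  rewrite -[_ *+ 'C(d, j)]mulr_natr.
  have -> : ('C(k, m + j))%:R * (-1) ^+ (m + j) * (('C(m + j, m))%:R * (-1) ^+ m * a m) * z ^+ (k - (m + j))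
     = (('C(k, m + j) * 'C(m + j, m))%N)%:R * ((-1) ^+ m * (-1) ^+ m) * (-1) ^+ j * a m * z ^+ (k - (m + j)).
    rewrite natrM exprD; ring.
  by rewrite bin_trin_nat // sgn_sq natrM subnDA expr1n; ring.
rewrite (eq_bigr _ (fun j _ => E2 j)) -mulr_sumr.
rewrite (eq_bigr (fun j : 'I_d.+1 => (-1) ^+ j * z ^+ (d - j) * 1 ^+ j *+ 'C(d, j))); last first.
  by move=> j _.
rewrite -exprBn.
have -> : 1 - z = - (z - 1) by rewrite opprB.
have s2 : (-1) ^+ k = (-1) ^+ m * (-1) ^+ d :> CC by rewrite -exprD -kd.
rewrite (exprNn (z - 1)) s2.
rewrite [RHS](_ : _ = ((-1) ^+ m * (-1) ^+ m) * ((-1) ^+ d * (-1) ^+ d) * (a m * ('C(k, m))%:R * (z - 1) ^+ d)); last by ring.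
by rewrite !sgn_sq !mul1r.
Qed.

Theorem lemma2p2 (a : nat -> CC) (n : nat) (r s t x y z : CC) :
  (0 < n)%N ->
  r + s + t = n%:R - 1 ->
  x + y + z = 1 ->
  \sum_(k < n.+1)
     (-1) ^+ k * binomC r k * x ^+ (n - k) *
     (binomC s (n - k) * Apoly a k y
      - (-1) ^+ n * binomC t (n - k) * Apoly (astar a) k z) = 0.
Proof.
move=> _ hrst hxyz.
have hz : 1 - z = x + y by rewrite -hxyz; ring.
pose F k l := (-1) ^+ k * binomC r k * x ^+ (n - k) *
   (binomC s (n - k) * (('C(k, l))%:R * (-1) ^+ l * a l * y ^+ (k - l))
    - (-1) ^+ n * binomC t (n - k) * ((-1) ^+ k * (('C(k, l))%:R * (-1) ^+ l * a l * (x + y) ^+ (k - l)))).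
transitivity (\sum_(k < n.+1) \sum_(l < n.+1) F k l).
  apply: eq_bigr => k _; have kn : (k <= n)%N by rewrite -ltnS ltn_ord.
  rewrite Apoly_astar hz !(@Apoly_widen a k n) // !mulr_sumr -sumrB mulr_sumr.
  by apply: eq_bigr => l _; rewrite /F; ring.
rewrite exchange_big; apply: big1 => l _.
have ln : (l <= n)%N by rewrite -ltnS ltn_ord.
rewrite (@shift_sum (fun k => F k l) l n ln); last first.
  by move=> k kl; rewrite /F bin_small //; ring.
set N := (n - l)%N.
have nN : n = (l + N)%N by rewrite /N subnKC.
set r' := r - l%:R.
have E : forall j : 'I_N.+1, F (l + j)%N l =
   a l * binomC r l * (hh (- y) r' j * hh x s (N - j) - hh (- (x + y)) r' j * hh (- x) t (N - j)).
  move=> j; have jN : (j <= N)%N by rewrite -ltnS ltn_ord.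
  have e1 : (n - (l + j) = N - j)%N by rewrite subnDA.
  have e2 : binomC r (l + j) * ('C(l + j, l))%:R = binomC r l * binomC r' j.
    by rewrite binomC_trin ?leq_addr // addKn.
  have sn : (-1) ^+ n = (-1) ^+ l * (-1) ^+ j * (-1) ^+ (N - j) :> CC.
    by rewrite -!exprD -addnA subnKC // -nN.
  rewrite /F e1 addKn sn exprD.
  rewrite [LHS](_ : _ = ((-1) ^+ l * (-1) ^+ l) * (a l * (binomC r (l + j) * ('C(l + j, l))%:R) *
     ((-1) ^+ j * y ^+ j * binomC s (N - j) * x ^+ (N - j)))
     - ((-1) ^+ l * (-1) ^+ l) * ((-1) ^+ l * (-1) ^+ l) * ((-1) ^+ j * (-1) ^+ j) *
     (a l * (binomC r (l + j) * ('C(l + j, l))%:R) *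
     ((-1) ^+ j * (x + y) ^+ j * ((-1) ^+ (N - j) * x ^+ (N - j)) * binomC t (N - j)))); last first.
    move: ((-1) ^+ l) ((-1) ^+ j) ((-1) ^+ (N - j)) (binomC r (l + j)) (('C(l + j, l))%:R : CC) => A1 A2 A3 A4 A5.
    ring.
  rewrite !sgn_sq !mul1r e2 /hh (exprNn y) (exprNn (x + y)) (exprNn x).
  move: ((-1) ^+ j) ((-1) ^+ (N - j)) => A1 A2; ring.
rewrite (eq_bigr _ (fun j _ => E j)) -mulr_sumr sumrB.
have ht : t = N%:R - 1 - r' - s.
  have : n%:R = l%:R + N%:R :> CC by rewrite -natrD -nN.
  move=> hn; rewrite /r'; apply: (addrI (r + s)); rewrite addrA hrst hn; ring.
have := core x y N r' s; rewrite /TT => ->.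
by rewrite -ht subrr mulr0.
Qed.
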